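(* Let $c>0$. There is a constant $C=C(c)$ such that the following holds. Let $H=(V,\mathcal{E})$ be a hypergraph with $|V|=n$ whose Delaunay graph is hereditarily $c$-linear, let $k=\max_{e\in\mathcal{E}}|e|$, and let $X=\{\{p,q\}: p,q\in V,\ p\ne q,\ p,q \text{ are friends}\}$. Then $|X|\le C\, n\, \max(k,1)$, i.e. $|X|=O(nk)$.
   Context: A hypergraph $H=(V,\mathcal{E})$ consists of a finite vertex set $V$ and a collection $\mathcal{E}$ of subsets of $V$ (hyperedges). For $S\subseteq V$, the induced subhypergraph is $H|_S=(S,\{e\cap S: e\in\mathcal{E}\})$. The Delaunay graph of a hypergraph $H=(V,\mathcal{E})$ is the graph on vertex set $V$ whose edges are the hyperedges $e\in\mathcal{E}$ with $|e|=2$. $H$ has a hereditarily $c$-linear Delaunay graph if for every nonempty $S\subseteq V$, the Delaunay graph $G_S$ of $H|_S$ satisfies $|E(G_S)|<c\,|S|$. Two vertices $u,v\in V$ are friends if there is some $e\in\mathcal{E}$ with $u,v\in e$. *)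

(* Defs.v *)
From mathcomp Require Import all_boot.
From Stdlib Require Import Reals.
Set Implicit Arguments. Unset Strict Implicit. Unset Printing Implicit Defensive.

(* A hypergraph on a finite vertex type V is given by its set of hyperedges
   E : {set {set V}}. *)

(* Edge set of the Delaunay graph of the induced subhypergraph H|_S:
   the traces e ∩ S (e ∈ E) having exactly two elements. *)
Definition delaunay_edges (V : finType) (E : {set {set V}}) (S : {set V})
  : {set {set V}} :=
  [set e :&: S | e in E & #|e :&: S| == 2].

Definition hered_c_linear (V : finType) (E : {set {set V}}) (c : R) : Prop :=
  forall S : {set V}, S != set0 ->
    (INR #|delaunay_edges E S| < c * INR #|S|)%R.

(* Maximum hyperedge size k (0 if there are no hyperedges). *)
Definition max_edge_size (V : finType) (E : {set {set V}}) : nat :=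
  \max_(e in E) #|e|.

Definition friend_pairs (V : finType) (E : {set {set V}}) : {set {set V}} :=
  [set P : {set V} | [exists p : V, exists q : V,
     [&& p != q, P == [set p; q] & [exists e in E, (p \in e) && (q \in e)]]]].

(* Main.v *)
Require Import Defs.
From mathcomp Require Import all_boot.
From Stdlib Require Import Reals.
From Stdlib Require Import Lra Lia.
From mathcomp Require Import zify.

Lemma INR_expn (x a : nat) : INR (expn x a) = (INR x ^ a)%R.
Proof. elim: a => [|a IH]; first by []. rewrite expnS mult_INR IH /=; ring. Qed.

Lemma exp_pow_R (x : R) (a : nat) : (exp x ^ a = exp (INR a * x))%R.
Proof.
elim: a => [|a IH]; first by rewrite /= Rmult_0_l exp_0.
change (exp x ^ a.+1)%R with (exp x * exp x ^ a)%R. rewrite IH -exp_plus S_INR. f_equal; ring.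
Qed.

Lemma ratio (N a : nat) : (0 < N)%nat -> (a <= N)%nat -> (expn N.+1 a <= 3 * expn N a)%nat.
Proof.
move=> N0 aN.
have HN : (0 < INR N)%R by apply: lt_0_INR; apply/ltP.
have Ha : (INR a <= INR N)%R by apply: le_INR; apply/leP.
apply/leP; apply: INR_le. rewrite mult_INR !INR_expn S_INR.
replace (INR N + 1)%R with (INR N * (1 + / INR N))%R by (field; lra).
rewrite Rpow_mult_distr.
have h1 : ((1 + / INR N) ^ a <= exp (/ INR N) ^ a)%R.
  apply: pow_incr; split; [|apply: exp_ineq1_le].
  have := Rinv_0_lt_compat _ HN; lra.
rewrite exp_pow_R in h1.
have h2 : (exp (INR a * / INR N) <= exp 1)%R.
  have : (INR a * / INR N <= 1)%R.
    apply (Rmult_le_reg_r (INR N)); first lra.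
    rewrite Rmult_assoc Rinv_l; lra.
  case/Rle_lt_or_eq_dec => h; last by rewrite h; lra.
  by apply/Rlt_le/exp_increasing.
have := exp_le_3. have := pow_lt (INR N) a HN. simpl. nra.
Qed.

Lemma sum_bool_card (T : finType) (b : pred T) : \sum_(x : T) (b x : nat) = #|b|.
Proof.
rewrite -sum1_card [RHS]big_mkcond /=; apply: eq_bigr => x _; by rewrite unfold_in; case: (b x).
Qed.

Lemma INR_sum_le (I : finType) (a b : I -> nat) (c : R) :
  (forall i, INR (a i) <= c * INR (b i))%R ->
  (INR (\sum_(i : I) a i) <= c * INR (\sum_(i : I) b i))%R.
Proof.
move=> H.
apply: (big_ind2 (fun x y => INR x <= c * INR y)%R).
- rewrite /=; lra.
- move=> x1 x2 y1 y2 h1 h2; rewrite !plus_INR; lra.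
- by move=> i _.
Qed.

Section Comb.
Variables (V : finType) (E : {set {set V}}) (N : nat).
Definition FT := {ffun V -> 'I_N.+1}.
Definition Sf (f : FT) : {set V} := [set x | f x == ord0].
Definition Df (f : FT) := delaunay_edges E (Sf f).

Lemma card_pred_ffun (F : V -> pred 'I_N.+1) :
  #|[pred f : FT | [forall x, f x \in F x]]| = \prod_(x : V) #|F x|.
Proof.
have -> : #|[pred f : FT | [forall x, f x \in F x]]| = #|(family_mem (fun x => mem (F x)) : simpl_pred {ffun V -> 'I_N.+1})|.
  by apply: eq_card => f; rewrite !inE.
rewrite card_family /image_mem -big_enum /= big_map.
rewrite enumT; elim: (Finite.enum V) => [|x s IH]; by rewrite ?big_nil ?big_cons //= IH.
Qed.

Lemma sumS : \sum_(f : FT) #|Sf f| = #|V| * expn N.+1 (#|V|).-1.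
Proof.
have -> : \sum_(f : FT) #|Sf f| = \sum_(f : FT) \sum_(v : V) ((f v == ord0) : nat).
  apply: eq_bigr => f _; rewrite -sum1_card big_mkcond /=; apply: eq_bigr => v _; rewrite inE; by case: (f v == ord0).
rewrite exchange_big /=.
have -> : \sum_(v : V) \sum_(f : FT) ((f v == ord0) : nat) = \sum_(v : V) expn N.+1 (#|V|).-1.
  apply: eq_bigr => v _.
  rewrite (@sum_bool_card _ (fun f : FT => f v == ord0)).
  pose F := fun x : V => [pred y : 'I_N.+1 | (x == v) ==> (y == ord0)].
  have -> : #|(fun f : FT => f v == ord0)| = #|[pred f : FT | [forall x, f x \in F x]]|.
    apply: eq_card => f; rewrite !inE; apply/idP/forallP => [h x | h].
      by rewrite inE; apply/implyP => /eqP ->.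
    by have := h v; rewrite inE eqxx.
  rewrite card_pred_ffun (bigD1 v) //=.
  have -> : #|F v| = 1.
    rewrite -(card1 (ord0 : 'I_N.+1)); apply: eq_card => y; by rewrite !inE eqxx.
  rewrite mul1n.
  have -> : \prod_(i | i != v) #|F i| = \prod_(i | i != v) N.+1.
    apply: eq_bigr => i hi; rewrite -[RHS](card_ord N.+1); apply: eq_card => y.
    by rewrite !inE (negbTE hi).
  by rewrite prod_nat_const cardC1.
by rewrite sum_nat_const.
Qed.


Lemma sumD_ge (X : {set {set V}}) :
  \sum_(P in X) #|[pred f : FT | P \in Df f]| <= \sum_(f : FT) #|Df f|.
Proof.
have -> : \sum_(P in X) #|[pred f : FT | P \in Df f]| =
          \sum_(P in X) \sum_(f : FT) ((P \in Df f) : nat).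
  apply: eq_bigr => P _; rewrite -sum1_card big_mkcond /=; apply: eq_bigr => f _.
  by rewrite inE; case: (P \in Df f).
rewrite exchange_big /=; apply: leq_sum => f _.
rewrite [X in _ <= X](_ : _ = \sum_(P : {set V}) ((P \in Df f) : nat)); last first.
  rewrite -sum1_card big_mkcond /=; apply: eq_bigr => P _; by case: (P \in Df f).
by rewrite [X in _ <= X](bigID (mem X)) /= leq_addr.
Qed.

Lemma cnt_lower (P : {set V}) :
  (0 < N)%nat -> max_edge_size E <= N.+1 -> P \in friend_pairs E ->
  expn N.+1 (#|V| - 2) <= 3 * #|[pred f : FT | P \in Df f]|.
Proof.
move=> N0 kN; rewrite inE => /existsP [p /existsP [q /and3P [pq /eqP PE /existsP [e /andP [eE /andP [pe qe]]]]]].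
have ek : #|e| <= N.+1.
  apply: leq_trans kN; rewrite /max_edge_size; exact: leq_bigmax_cond.
have Pe : P \subset e by rewrite PE; apply/subsetP => x; rewrite !inE => /orP [] /eqP ->.
have cP : #|P| = 2 by rewrite PE cards2 pq.
pose F := fun x : V => [pred y : 'I_N.+1 | if x \in P then y == ord0 else if x \in e then y != ord0 else true].
have sub : #|[pred f : FT | [forall x, f x \in F x]]| <= #|[pred f : FT | P \in Df f]|.
  apply: subset_leq_card; apply/subsetP => f; rewrite !inE => /forallP H.
  have HS : e :&: Sf f = P.
    apply/setP => x; rewrite !inE; have := H x; rewrite inE.
    case: (boolP (x \in P)) => xP.
      by move=> ->; rewrite (subsetP Pe x xP).
    by case: (x \in e) => //= /negbTE ->.
  rewrite /Df /delaunay_edges; apply/imsetP; exists e; last by rewrite HS.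
  by rewrite inE eE HS cP.
apply: leq_trans (leq_mul (leqnn 3) sub).
rewrite card_pred_ffun.
have gE : forall x, #|F x| = if x \in P then 1 else if x \in e then N else N.+1.
  move=> x; case: (boolP (x \in P)) => xP.
    rewrite -(card1 (ord0 : 'I_N.+1)); apply: eq_card => y; by rewrite !inE xP.
  case: (boolP (x \in e)) => xe.
    transitivity #|predC1 (ord0 : 'I_N.+1)|; last by rewrite cardC1 card_ord.
    apply: eq_card => y; by rewrite !inE (negbTE xP) xe.
  rewrite -[RHS](card_ord N.+1); apply: eq_card => y; by rewrite !inE (negbTE xP) (negbTE xe).
rewrite (eq_bigr _ (fun x _ => gE x)).
rewrite (bigID (fun x => x \in e)) /=.
rewrite (bigID (fun x => x \in P)) /=.
rewrite big1; last by move=> x /andP [_ ->].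
rewrite mul1n.
have -> : \prod_(i | (i \in e) && (i \notin P)) (if i \in P then 1 else if i \in e then N else N.+1)
          = \prod_(i | (i \in e) && (i \notin P)) N.
  by apply: eq_bigr => i /andP [-> /negbTE ->].
have -> : \prod_(i | i \notin e) (if i \in P then 1 else if i \in e then N else N.+1)
          = \prod_(i | i \notin e) N.+1.
  apply: eq_bigr => i ie.
  have iP : i \notin P by apply: contra ie; apply: (subsetP Pe).
  by rewrite (negbTE iP) (negbTE ie).
rewrite !prod_nat_const.
have c1 : #|[pred i | (i \in e) && (i \notin P)]| = #|e| - 2.
  transitivity #|e :\: P|; last by rewrite cardsD (setIidPr Pe) cP.
  apply: eq_card => x; by rewrite !inE andbC.
have c2 : #|[pred i | i \notin e]| = #|V| - #|e|.
  rewrite -(cardsC e); rewrite addKn; apply: eq_card => x; by rewrite !inE.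
rewrite c1 c2.
have e2 : 2 <= #|e| by rewrite -cP subset_leq_card.
have eV : #|e| <= #|V| by apply: max_card.
have -> : #|V| - 2 = (#|e| - 2) + (#|V| - #|e|) by lia.
rewrite expnD mulnA leq_mul2r ratio ?orbT //; lia.
Qed.

Lemma Df_le (c : R) : hered_c_linear E c -> (0 < c)%R ->
  forall f : FT, (INR #|Df f| <= c * INR #|Sf f|)%R.
Proof.
move=> H c0 f; case: (boolP (Sf f == set0)) => [/eqP S0 | Sn].
  have -> : #|Df f| = 0.
    apply/eqP; rewrite cards_eq0; apply/eqP/setP => P; rewrite inE /Df /delaunay_edges S0.
    apply/negbTE/negP => /imsetP [e]; by rewrite inE setI0 cards0 andbF.
  rewrite S0 cards0 /=; lra.
by apply: Rlt_le; apply: H.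
Qed.

End Comb.

Theorem mainTheorem2 :
  forall c : R, (0 < c)%R ->
  exists C : R,
    forall (V : finType) (E : {set {set V}}),
      hered_c_linear E c ->
      (INR #|friend_pairs E| <= C * INR #|V| * INR (maxn (max_edge_size E) 1))%R.
Proof.
move=> c c0; exists (3 * c)%R => V E Hlin.
case: (boolP (friend_pairs E == set0)) => [/eqP -> | Xne].
  rewrite cards0 /=.
  have := pos_INR #|V|; have := pos_INR (maxn (max_edge_size E) 1).
  move=> h1 h2; apply: Rmult_le_pos => //; apply: Rmult_le_pos => //; lra.
have [P PX] : exists P, P \in friend_pairs E.
  by case/set0Pn: Xne => P PX; exists P.
have PX' := PX.
move: PX'; rewrite inE => /existsP [p /existsP [q /and3P [pq /eqP PE /existsP [e /andP [eE /andP [pe qe]]]]]].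
have e2 : 2 <= #|e| by have := cards2 p q; rewrite pq => <-; apply: subset_leq_card; apply/subsetP => x; rewrite !inE => /orP [] /eqP ->.
have ek : #|e| <= max_edge_size E by exact: leq_bigmax_cond.
have eV : #|e| <= #|V| by apply: max_card.
set k := max_edge_size E in ek *.
set N := k.-1.
have kN : k = N.+1 by rewrite /N; lia.
have N0 : 0 < N by lia.
have hk : maxn k 1 = N.+1 by rewrite kN; lia.
rewrite hk.
set n := #|V| in eV *.
pose Q := expn N.+1 (n - 2).
have a : #|friend_pairs E| * Q <= 3 * \sum_(f : FT V N) #|Df V E N f|.
  apply: leq_trans (leq_mul (leqnn 3) (sumD_ge V E N (friend_pairs E))).
  rewrite big_distrr /= -sum_nat_const.
  apply: leq_sum => P' P'X; apply: cnt_lower => //; rewrite -kN.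
  exact: leqnn.
have b := INR_sum_le _ _ _ c (@Df_le V E N c Hlin c0).
have cS : \sum_(f : FT V N) #|Sf V N f| = n * N.+1 * Q.
  rewrite (sumS V N) /Q -mulnA -expnS; congr (_ * expn _ _); lia.
rewrite cS !mult_INR in b.
have a' := le_INR _ _ (leP a). rewrite !mult_INR in a'.
have Qp : (0 < INR Q)%R by apply: lt_0_INR; apply/ltP; rewrite /Q expn_gt0.
have : (INR #|friend_pairs E| * INR Q <= (3 * c * INR n * INR N.+1) * INR Q)%R.
  replace (3 * c * INR n * INR N.+1 * INR Q)%R with (3 * (c * (INR n * INR N.+1 * INR Q)))%R by ring.
  have h3 : (INR 3 = 3)%R by rewrite /=; ring.
  rewrite h3 in a'; apply: (Rle_trans _ _ _ a'); apply: Rmult_le_compat_l; [lra | exact: b].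
move=> h; apply: (Rmult_le_reg_r (INR Q)) => //.
Qed.
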